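(* $\mathrm{Log}_{<1}(\mathbb{Q})\subseteq\mathrm{Log}_{<1}(\mathbb{R})$.
   Context: Modal formulas are built from a countable set of propositional variables using $\bot$, $\to$ and one unary modality $\lozenge$. A frame is a pair $(X,R)$; a valuation assigns subsets of $X$ to variables; $x\models\lozenge\varphi$ iff there is $y$ with $xRy$ and $y\models\varphi$. A formula is valid in a frame if true at every point under every valuation. For a metric space $(X,d)$, $\mathrm{Log}_{<1}(X)$ is the set of modal formulas valid in the frame $(X,R_{<1})$, where $xR_{<1}y$ iff $d(x,y)<1$. $\mathbb{R}$ and $\mathbb{Q}$ carry the metric $d(x,y)=|x-y|$. *)

(* Defs.v *)
From Stdlib Require Import Reals QArith Qabs.

Inductive form : Type :=
| Var : nat -> form
| Bot : form
| Imp : form -> form -> form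
| Dia : form -> form.

Fixpoint sat {X : Type} (R : X -> X -> Prop) (V : nat -> X -> Prop)
  (x : X) (phi : form) : Prop :=
  match phi with
  | Var n => V n x
  | Bot => False
  | Imp a b => sat R V x a -> sat R V x b
  | Dia a => exists y, R x y /\ sat R V y a
  end.

Definition valid_in {X : Type} (R : X -> X -> Prop) (phi : form) : Prop :=
  forall (V : nat -> X -> Prop) (x : X), sat R V x phi.

Definition R_lt1_R (x y : R) : Prop := (Rabs (x - y) < 1)%R.
(* The rationals as the subspace of R consisting of rational reals
   (avoids Stdlib Q's non-canonical representations). *)
Definition QinR : Type := { x : R | exists q : Q, x = Q2R q }.
Definition R_lt1_Q (x y : QinR) : Prop := (Rabs (proj1_sig x - proj1_sig y) < 1)%R.

Definition Log_lt1_R (phi : form) : Prop := valid_in R_lt1_R phi.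
Definition Log_lt1_Q (phi : form) : Prop := valid_in R_lt1_Q phi.

(* Main.v *)
Require Import Defs.
From Stdlib Require Import Reals QArith Qabs Qreals Lra Lia List ClassicalEpsilon Classical Cantor.
Import ListNotations.
Open Scope R_scope.

Section BFsec.
Variables A B : R -> Prop.
Hypothesis A01 : forall x, A x -> 0 <= x < 1.
Hypothesis B01 : forall x, B x -> 0 <= x < 1.
Hypothesis Bd : forall u v, 0 <= u -> u < v -> v <= 1 -> exists y, B y /\ u < y < v.

Definition good (L : list (R*R)) :=
  (forall p, In p L -> A (fst p) /\ B (snd p)) /\
  (forall p p', In p L -> In p' L -> (fst p < fst p' <-> snd p < snd p')).

Definition spec (L : list (R*R)) a r :=
  forall p, In p L -> (fst p < a <-> snd p < r) /\ (a < fst p <-> r < snd p).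

Lemma bounds (L : list (R*R)) a : forall M, incl M L ->
  exists lo hi, (lo = 0 \/ exists p, In p L /\ fst p < a /\ snd p = lo) /\
                (hi = 1 \/ exists p, In p L /\ a < fst p /\ snd p = hi) /\
                forall p, In p M -> (fst p < a -> snd p <= lo) /\ (a < fst p -> hi <= snd p).
Proof.
  induction M as [|p M IH]; intros Hi.
  - exists 0, 1. split; [left; reflexivity|]. split; [left; reflexivity|]. intros p [].
  - assert (HpL : In p L) by (apply Hi; left; reflexivity).
    destruct IH as (lo & hi & Hlo & Hhi & HM). { intros q Hq; apply Hi; right; exact Hq. }
    destruct (Rlt_dec (fst p) a) as [Hlt|Hnlt].
    + destruct (Rle_dec (snd p) lo) as [Hle|Hnle].
      * exists lo, hi. split; [exact Hlo|]. split; [exact Hhi|].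
        intros q [<-|Hq]; [split; intros; lra| apply HM; exact Hq].
      * exists (snd p), hi. split; [right; exists p; auto|]. split; [exact Hhi|].
        intros q [<-|Hq]; [split; intros; lra|].
        destruct (HM q Hq) as [H1 H2]. split; intros; [specialize (H1 H); lra| auto].
    + destruct (Rlt_dec a (fst p)) as [Hgt|Hngt].
      * destruct (Rle_dec hi (snd p)) as [Hle|Hnle].
        -- exists lo, hi. split; [exact Hlo|]. split; [exact Hhi|].
           intros q [<-|Hq]; [split; intros; lra| apply HM; exact Hq].
        -- exists lo, (snd p). split; [exact Hlo|]. split; [right; exists p; auto|].
           intros q [<-|Hq]; [split; intros; lra|].
           destruct (HM q Hq) as [H1 H2]. split; intros; [auto| specialize (H2 H); lra].
      * exists lo, hi. split; [exact Hlo|]. split; [exact Hhi|].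
        intros q [<-|Hq]; [split; intros; lra| apply HM; exact Hq].
Qed.

Lemma exists_fwd L a : good L -> In (0,0) L -> A a -> exists r, B r /\ spec L a r.
Proof.
  intros [G1 G2] H0 Ha.
  destruct (classic (exists p, In p L /\ fst p = a)) as [[p0 [Hp0 Hpa]]|Hn].
  - exists (snd p0). split; [apply (G1 p0 Hp0)|]. intros p Hp. subst a.
    split; [apply G2; auto| apply G2; auto].
  - destruct (bounds L a L (fun x h => h)) as (lo & hi & Hlo & Hhi & HM).
    assert (Hlo0 : 0 <= lo).
    { destruct Hlo as [->|(p & Hp & _ & <-)]; [lra| apply (B01 _ (proj2 (G1 p Hp)))]. }
    assert (Hhi1 : hi <= 1).
    { destruct Hhi as [->|(p & Hp & _ & <-)]; [lra| left; apply (B01 _ (proj2 (G1 p Hp)))]. }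
    assert (Hlohi : lo < hi).
    { destruct (A01 a Ha) as [Ha0 Ha1].
      destruct Hlo as [->|(p & Hp & Hpa & <-)]; destruct Hhi as [->|(p' & Hp' & Hpa' & <-)].
      - lra.
      - apply (G2 (0,0) p' H0 Hp'). simpl. lra.
      - apply (B01 _ (proj2 (G1 p Hp))).
      - apply (G2 p p' Hp Hp'). lra. }
    destruct (Bd lo hi Hlo0 Hlohi Hhi1) as (r & Hr & Hr1 & Hr2).
    exists r. split; [exact Hr|]. intros p Hp.
    assert (Hne : fst p <> a) by (intro E; apply Hn; exists p; auto).
    destruct (HM p Hp) as [H1 H2].
    split; split; intro H.
    + specialize (H1 H); lra.
    + destruct (Rtotal_order (fst p) a) as [h|[h|h]]; [exact h|contradiction|specialize (H2 h); lra].
    + specialize (H2 H); lra.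
    + destruct (Rtotal_order (fst p) a) as [h|[h|h]]; [specialize (H1 h); lra|contradiction|exact h].
Qed.

Lemma good_cons L a r : good L -> A a -> B r -> spec L a r -> good ((a,r)::L).
Proof.
  intros [G1 G2] Ha Hr Hs. split.
  - intros p [<-|Hp]; [auto| apply G1; auto].
  - intros p p' [<-|Hp] [<-|Hp']; simpl.
    + split; intro; lra.
    + apply (Hs p' Hp').
    + apply (Hs p Hp).
    + apply G2; auto.
Qed.
End BFsec.

Definition swp (L : list (R*R)) := map (fun p => (snd p, fst p)) L.

Lemma in_swp L p : In p (swp L) <-> In (snd p, fst p) L.
Proof.
  unfold swp. rewrite in_map_iff. split.
  - intros [q [<- Hq]]. destruct q; simpl; auto.
  - intros H. exists (snd p, fst p). destruct p; simpl; auto.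
Qed.

Lemma good_swp A B L : good A B L -> good B A (swp L).
Proof.
  intros [G1 G2]. split.
  - intros p Hp. apply in_swp in Hp. destruct (G1 _ Hp) as [h1 h2]. simpl in *. auto.
  - intros p p' Hp Hp'. apply in_swp in Hp. apply in_swp in Hp'.
    specialize (G2 _ _ Hp Hp'). simpl in G2. tauto.
Qed.

Lemma good_cons_back A B L s b : good A B L -> A s -> B b -> spec (swp L) b s -> good A B ((s,b)::L).
Proof.
  intros [G1 G2] Ha Hr Hs. split.
  - intros p [<-|Hp]; [auto| apply G1; auto].
  - intros p p' [<-|Hp] [<-|Hp']; simpl.
    + split; intro; lra.
    + assert (Hin : In (snd p', fst p') (swp L)) by (apply in_swp; destruct p'; exact Hp').
      assert (H := Hs _ Hin).
      simpl in H. tauto.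
    + assert (Hin : In (snd p, fst p) (swp L)) by (apply in_swp; destruct p; exact Hp).
      assert (H := Hs _ Hin).
      simpl in H. tauto.
    + apply G2; auto.
Qed.
Section BFmain.
Variables ea eb : nat -> R.
Let A := fun y => exists n, ea n = y.
Let B := fun y => exists n, eb n = y.
Hypothesis A01 : forall x, A x -> 0 <= x < 1.
Hypothesis B01 : forall x, B x -> 0 <= x < 1.
Hypothesis A0 : A 0.
Hypothesis B0 : B 0.
Hypothesis Ad : forall u v, 0 <= u -> u < v -> v <= 1 -> exists y, A y /\ u < y < v.
Hypothesis Bd : forall u v, 0 <= u -> u < v -> v <= 1 -> exists y, B y /\ u < y < v.

Definition fwd L a := epsilon (inhabits 0) (fun r => B r /\ spec L a r).
Definition bwd L b := epsilon (inhabits 0) (fun s => A s /\ spec (swp L) b s).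

Fixpoint Ls n : list (R*R) := match n with
  | O => [(0,0)]
  | S n => let L1 := (ea n, fwd (Ls n) (ea n)) :: Ls n in (bwd L1 (eb n), eb n) :: L1 end.

Lemma Ls_inv n : good A B (Ls n) /\ In (0,0) (Ls n).
Proof.
  induction n as [|n [IHg IH0]]; simpl.
  - split; [|left; reflexivity]. split.
    + intros p [<-|[]]; simpl; auto.
    + intros p p' [<-|[]] [<-|[]]; simpl; split; intro; lra.
  - assert (HA : A (ea n)) by (exists n; reflexivity).
    assert (Hf : B (fwd (Ls n) (ea n)) /\ spec (Ls n) (ea n) (fwd (Ls n) (ea n))).
    { unfold fwd. apply epsilon_spec. apply (exists_fwd A B); auto. }
    set (L1 := (ea n, fwd (Ls n) (ea n)) :: Ls n).
    assert (G1 : good A B L1) by (apply (good_cons A B); tauto).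
    assert (HB : B (eb n)) by (exists n; reflexivity).
    assert (Hb : A (bwd L1 (eb n)) /\ spec (swp L1) (eb n) (bwd L1 (eb n))).
    { unfold bwd. apply epsilon_spec. apply (exists_fwd B A); auto.
      - apply good_swp; auto.
      - apply in_swp. simpl. unfold L1; right; exact IH0. }
    split.
    + apply good_cons_back; tauto.
    + right; right; exact IH0.
Qed.

Lemma Ls_incl k n : incl (Ls n) (Ls (k + n)).
Proof.
  induction k; simpl; intros p Hp; [exact Hp| right; right; apply IHk; exact Hp].
Qed.

Lemma Ls_both p p' n m : In p (Ls n) -> In p' (Ls m) -> exists N, In p (Ls N) /\ In p' (Ls N).
Proof.
  intros H1 H2. exists (m + n)%nat. split; [apply Ls_incl; auto|].
  rewrite Nat.add_comm. apply Ls_incl; auto.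
Qed.

Lemma Ls_ord x r y s n m : In (x,r) (Ls n) -> In (y,s) (Ls m) -> (x < y <-> r < s).
Proof.
  intros H1 H2. destruct (Ls_both _ _ _ _ H1 H2) as (N & h1 & h2).
  destruct (Ls_inv N) as [[_ G] _]. apply (G _ _ h1 h2).
Qed.

Lemma Ls_uniq x r s n m : In (x,r) (Ls n) -> In (x,s) (Ls m) -> r = s.
Proof.
  intros H1 H2. assert (E1 := Ls_ord _ _ _ _ _ _ H1 H2). assert (E2 := Ls_ord _ _ _ _ _ _ H2 H1).
  destruct (Rtotal_order r s) as [h|[h|h]]; [apply E1 in h; lra|exact h|apply E2 in h; lra].
Qed.

Definition Ff x := epsilon (inhabits 0) (fun r => exists n, In (x,r) (Ls n)).

Lemma Ff_in x : A x -> exists n, In (x, Ff x) (Ls n).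
Proof.
  intros [n <-]. unfold Ff. apply epsilon_spec.
  exists (fwd (Ls n) (ea n)), (S n). simpl. right; left; reflexivity.
Qed.

Lemma Ff_eq x r n : A x -> In (x, r) (Ls n) -> Ff x = r.
Proof.
  intros Hx H. destruct (Ff_in x Hx) as [m Hm]. eapply Ls_uniq; eauto.
Qed.

Theorem BF_prop :
  (forall x, A x -> B (Ff x)) /\ (forall x y, A x -> A y -> x < y -> Ff x < Ff y) /\
  (forall y, B y -> exists x, A x /\ Ff x = y) /\ Ff 0 = 0.
Proof.
  split; [|split; [|split]].
  - intros x Hx. destruct (Ff_in x Hx) as [n Hn].
    destruct (Ls_inv n) as [[G _] _]. apply (G _ Hn).
  - intros x y Hx Hy Hxy. destruct (Ff_in x Hx) as [n Hn]. destruct (Ff_in y Hy) as [m Hm].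
    apply (Ls_ord _ _ _ _ _ _ Hn Hm). exact Hxy.
  - intros y [n <-]. exists (bwd ((ea n, fwd (Ls n) (ea n)) :: Ls n) (eb n)).
    assert (Hin : In (bwd ((ea n, fwd (Ls n) (ea n)) :: Ls n) (eb n), eb n) (Ls (S n))) by (simpl; left; reflexivity).
    destruct (Ls_inv (S n)) as [[G _] _]. destruct (G _ Hin) as [HA _]. simpl in HA.
    split; [exact HA|]. eapply Ff_eq; eauto.
  - apply (Ff_eq 0 0 O A0). simpl; left; reflexivity.
Qed.
End BFmain.

Definition qenum (n : nat) : Q :=
  let (a, b) := Cantor.of_nat n in let (c, d) := Cantor.of_nat a in
  Qmake (Z.of_nat c - Z.of_nat d) (Pos.of_nat b).

Lemma qenum_surj q : exists n, qenum n = q.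
Proof.
  destruct q as [z p].
  exists (Cantor.to_nat (Cantor.to_nat (Z.to_nat z, Z.to_nat (- z)), Pos.to_nat p)).
  unfold qenum. rewrite !Cantor.cancel_of_to. f_equal; [lia| apply Pos2Nat.id].
Qed.

Lemma dense_helper u v z N w : u < v -> w < v - u -> u * N < z -> z - u*N <= 1 -> 0 < N -> N * w = 1 -> 0 < w -> u < z * w < v.
Proof.
intros. split.
- assert (u * N * w < z * w) by (apply Rmult_lt_compat_r; lra).
  replace (u*N*w) with (u * (N*w)) in H6 by ring. rewrite H4 in H6. lra.
- assert (z * w <= (u*N + 1) * w) by (apply Rmult_le_compat_r; lra).
  replace ((u*N+1)*w) with (u*(N*w) + w) in H6 by ring. rewrite H4 in H6. lra.
Qed.

Lemma Q_dense u v : u < v -> exists q, u < Q2R q < v.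
Proof.
  intros Huv. destruct (archimed_cor1 (v - u)) as [N [HN HN0]]; [lra|].
  set (z := up (u * INR N)). destruct (archimed (u * INR N)) as [H1 H2]. fold z in H1, H2.
  exists (Qmake z (Pos.of_nat N)). unfold Q2R. simpl.
  assert (E : IZR (Z.pos (Pos.of_nat N)) = INR N).
  { rewrite INR_IZR_INZ. f_equal. destruct N; [lia|]. rewrite <- Pos.of_nat_succ. reflexivity. }
  rewrite E. assert (Hn : 0 < INR N) by (apply lt_0_INR; lia).
  assert (Hw : INR N * / INR N = 1) by (field; lra).
  assert (Hw0 : 0 < / INR N) by (apply Rinv_0_lt_compat; lra).
  apply (dense_helper u v (IZR z) (INR N)); auto; lra.
Qed.

Definition flo (r : R) : Z := (up r - 1)%Z.
Definition fr (r : R) : R := r - IZR (flo r).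

Lemma flo_spec r : IZR (flo r) <= r < IZR (flo r) + 1.
Proof. unfold flo. rewrite minus_IZR. destruct (archimed r). lra. Qed.

Lemma flo_uniq k r : IZR k <= r < IZR k + 1 -> flo r = k.
Proof.
  intros H. unfold flo. rewrite <- (tech_up r (k + 1)); [lia| rewrite plus_IZR; lra| rewrite plus_IZR; lra].
Qed.

Lemma fr_range r : 0 <= fr r < 1.
Proof. unfold fr. destruct (flo_spec r). lra. Qed.

Lemma fr_small r : 0 <= r < 1 -> fr r = r.
Proof. intros H. unfold fr. rewrite (flo_uniq 0 r); simpl; lra. Qed.

Definition Qr (a : R) := exists q, a = Q2R q.

Lemma Q2R_Z k : Q2R (inject_Z k) = IZR k.
Proof. unfold Q2R. simpl. rewrite Rinv_1. ring. Qed.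

Lemma Qr_Z k : Qr (IZR k).
Proof. exists (inject_Z k). rewrite Q2R_Z. reflexivity. Qed.

Lemma Qr_plus a b : Qr a -> Qr b -> Qr (a + b).
Proof. intros [p ->] [q ->]. exists (p + q)%Q. rewrite Q2R_plus. reflexivity. Qed.

Lemma Qr_minus a b : Qr a -> Qr b -> Qr (a - b).
Proof. intros [p ->] [q ->]. exists (p - q)%Q. rewrite Q2R_minus. reflexivity. Qed.

Lemma Qr_fr a : Qr a -> Qr (fr a).
Proof. intros H. unfold fr. apply Qr_minus; [exact H| apply Qr_Z]. Qed.

Lemma Qr_one : Qr 1.
Proof. exact (Qr_Z 1%Z). Qed.

Definition ea (n : nat) : R := fr (Q2R (qenum n)).

Lemma ea_A01 x : (exists n, ea n = x) -> 0 <= x < 1.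
Proof. intros [n <-]. apply fr_range. Qed.

Lemma ea_Qr a : Qr a -> exists n, ea n = fr a.
Proof. intros [q ->]. destruct (qenum_surj q) as [n Hn]. exists n. unfold ea. rewrite Hn. reflexivity. Qed.

Lemma ea_A0 : exists n, ea n = 0.
Proof.
  destruct (ea_Qr 0 (Qr_Z 0)) as [n Hn]. exists n. rewrite Hn. apply fr_small. lra.
Qed.

Lemma ea_Ad u v : 0 <= u -> u < v -> v <= 1 -> exists y, (exists n, ea n = y) /\ u < y < v.
Proof.
  intros H0 H1 H2. destruct (Q_dense u v H1) as [q Hq].
  destruct (ea_Qr (Q2R q) (ex_intro _ q eq_refl)) as [n Hn].
  exists (Q2R q). split; [|lra]. exists n. rewrite Hn. apply fr_small. lra.
Qed.

Lemma ea_rat y : (exists n, ea n = y) -> Qr y.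
Proof. intros [n <-]. unfold ea. apply Qr_fr. exists (qenum n). reflexivity. Qed.

Section Gsec.
Variable eD : nat -> R.
Variable x0 : R.
Hypothesis Ddense : forall u v, u < v -> exists n, u < eD n < v.

Definition eb (n : nat) : R := match n with O => 0 | S n => fr (eD n - x0) end.

Lemma eb_B01 x : (exists n, eb n = x) -> 0 <= x < 1.
Proof. intros [[|n] <-]; simpl; [lra| apply fr_range]. Qed.

Lemma eb_Bd u v : 0 <= u -> u < v -> v <= 1 -> exists y, (exists n, eb n = y) /\ u < y < v.
Proof.
  intros H0 H1 H2. destruct (Ddense (x0 + u) (x0 + v)) as [n Hn]; [lra|].
  exists (eD n - x0). split; [|lra]. exists (S n). simpl. apply fr_small. lra.
Qed.

Definition F := Ff ea eb.

Lemma Fprops :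
  (forall x, (exists n, ea n = x) -> (exists n, eb n = F x)) /\
  (forall x y, (exists n, ea n = x) -> (exists n, ea n = y) -> x < y -> F x < F y) /\
  (forall y, (exists n, eb n = y) -> exists x, (exists n, ea n = x) /\ F x = y) /\ F 0 = 0.
Proof.
  apply BF_prop.
  - apply ea_A01.
  - apply eb_B01.
  - apply ea_A0.
  - exists O. reflexivity.
  - apply ea_Ad.
  - apply eb_Bd.
Qed.

Definition G (a : R) : R := x0 + IZR (flo a) + F (fr a).

Lemma F_range a : Qr a -> 0 <= F (fr a) < 1.
Proof.
  intros H. destruct Fprops as [P1 _]. apply eb_B01. apply P1. apply ea_Qr. exact H.
Qed.

Lemma G_mono a b : Qr a -> Qr b -> a < b -> G a < G b.
Proof.
  intros Ha Hb Hab. unfold G.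
  destruct (flo_spec a) as [a1 a2]. destruct (flo_spec b) as [b1 b2].
  assert (Hk : (flo a <= flo b)%Z).
  { assert (IZR (flo a) < IZR (flo b) + 1) by lra. rewrite <- plus_IZR in H.
    apply lt_IZR in H. lia. }
  destruct (Z.eq_dec (flo a) (flo b)) as [E|E].
  - rewrite E. destruct Fprops as [_ [P2 _]].
    assert (F (fr a) < F (fr b)).
    { apply P2; [apply ea_Qr; auto| apply ea_Qr; auto|]. unfold fr. rewrite E. lra. }
    lra.
  - assert (IZR (flo a) + 1 <= IZR (flo b)) by (rewrite <- plus_IZR; apply IZR_le; lia).
    destruct (F_range a Ha). destruct (F_range b Hb). lra.
Qed.

Lemma G_wmono a b : Qr a -> Qr b -> a <= b -> G a <= G b.
Proof.
  intros Ha Hb [H|H]; [left; apply G_mono; auto| right; subst; reflexivity].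
Qed.

Lemma G_shift a : G (a + 1) = G a + 1.
Proof.
  unfold G. assert (E : flo (a + 1) = (flo a + 1)%Z).
  { apply flo_uniq. rewrite plus_IZR. destruct (flo_spec a). lra. }
  assert (E2 : fr (a + 1) = fr a) by (unfold fr; rewrite E, plus_IZR; ring).
  rewrite E2, E, plus_IZR. ring.
Qed.

Lemma G_lt1 a b : Qr a -> Qr b -> Rabs (a - b) < 1 -> Rabs (G a - G b) < 1.
Proof.
  intros Ha Hb H. apply Rabs_def2 in H. apply Rabs_def1.
  - destruct (Rtotal_order a b) as [h|[h|h]].
    + assert (G a < G b) by (apply G_mono; auto). lra.
    + subst. lra.
    + assert (G b < G a) by (apply G_mono; auto).
      assert (G a < G (b + 1)) by (apply G_mono; [auto| apply Qr_plus; [auto|apply Qr_one]| lra]).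
      rewrite G_shift in H1. lra.
  - destruct (Rtotal_order a b) as [h|[h|h]].
    + assert (G a < G b) by (apply G_mono; auto).
      assert (G b < G (a + 1)) by (apply G_mono; [auto| apply Qr_plus; [auto|apply Qr_one]| lra]).
      rewrite G_shift in H1. lra.
    + subst. lra.
    + assert (G b < G a) by (apply G_mono; auto). lra.
Qed.

Lemma G_back a n : Qr a -> Rabs (G a - eD n) < 1 ->
  exists b, Qr b /\ Rabs (a - b) < 1 /\ G b = eD n.
Proof.
  intros Ha H. apply Rabs_def2 in H.
  destruct Fprops as [_ [_ [P3 _]]].
  destruct (P3 (fr (eD n - x0))) as [s [Hs Fs]]; [exists (S n); reflexivity|].
  destruct (ea_A01 s Hs) as [s0 s1].
  set (k := flo (eD n - x0)).
  set (b := IZR k + s).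
  assert (Qb : Qr b) by (apply Qr_plus; [apply Qr_Z| apply ea_rat; auto]).
  assert (Ek : flo b = k) by (apply flo_uniq; unfold b; lra).
  assert (Es : fr b = s) by (unfold fr; rewrite Ek; unfold b; ring).
  assert (Gb : G b = eD n).
  { unfold G. rewrite Ek, Es, Fs. unfold fr. fold k. ring. }
  exists b. split; [exact Qb|]. split; [|exact Gb].
  apply Rabs_def1.
  - destruct (Rlt_le_dec (a - 1) b) as [h|h]; [lra|].
    assert (G b <= G (a - 1)) by (apply G_wmono; auto; apply Qr_minus; [auto| apply Qr_one]).
    assert (E : G a = G (a - 1) + 1) by (rewrite <- G_shift; f_equal; ring).
    lra.
  - destruct (Rlt_le_dec b (a + 1)) as [h|h]; [lra|].
    assert (G (a + 1) <= G b) by (apply G_wmono; auto; apply Qr_plus; [auto| apply Qr_one]).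
    rewrite G_shift in H0. lra.
Qed.

Lemma G_0 : G 0 = x0.
Proof.
  unfold G. assert (E : flo 0 = 0%Z) by (apply flo_uniq; simpl; lra).
  assert (E2 : fr 0 = 0) by (apply fr_small; lra).
  rewrite E, E2. destruct Fprops as [_ [_ [_ P4]]]. rewrite P4. simpl. ring.
Qed.
End Gsec.

Fixpoint sub (f : form) : list form :=
  f :: match f with Imp a b => sub a ++ sub b | Dia a => sub a | _ => [] end.

Fixpoint p2l (p : positive) : list bool :=
  match p with xH => [] | xO p => false :: p2l p | xI p => true :: p2l p end.
Fixpoint l2p (l : list bool) : positive :=
  match l with [] => xH | false :: l => xO (l2p l) | true :: l => xI (l2p l) end.
Lemma p2l_l2p l : p2l (l2p l) = l.
Proof. induction l as [|[|] l IH]; simpl; congruence. Qed.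
Definition dec (m : nat) : list bool := p2l (Pos.of_nat m).
Lemma dec_surj l : exists m, dec m = l.
Proof. exists (Pos.to_nat (l2p l)). unfold dec. rewrite Pos2Nat.id. apply p2l_l2p. Qed.

Lemma map_eq_in {X Y} (f g : X -> Y) (l : list X) x : map f l = map g l -> In x l -> f x = g x.
Proof.
  induction l as [|y l IH]; simpl; [tauto|]. intros H [<-|Hx]; injection H; auto.
Qed.

Section Modal.
Variable phi : form.
Variable V : nat -> R -> Prop.
Variable x0 : R.
Let L := sub phi.

Definition tv (r : R) : list bool :=
  map (fun f => if excluded_middle_informative (sat R_lt1_R V r f) then true else false) L.

Lemma tv_eq d r f : tv d = tv r -> In f L -> (sat R_lt1_R V d f <-> sat R_lt1_R V r f).
Proof.
  intros H Hf. assert (E := map_eq_in _ _ _ _ H Hf). simpl in E.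
  destruct (excluded_middle_informative (sat R_lt1_R V d f));
  destruct (excluded_middle_informative (sat R_lt1_R V r f)); try discriminate; tauto.
Qed.

Definition eD (n : nat) : R :=
  let (k, m) := Cantor.of_nat n in let (i, j) := Cantor.of_nat k in
  epsilon (inhabits 0) (fun r => Q2R (qenum i) < r < Q2R (qenum j) /\ tv r = dec m).

Lemma eD_prop u r v : u < r < v -> exists n, u < eD n < v /\ tv (eD n) = tv r.
Proof.
  intros [H1 H2]. destruct (Q_dense u r H1) as [qi Hi]. destruct (Q_dense r v H2) as [qj Hj].
  destruct (qenum_surj qi) as [i Ei]. destruct (qenum_surj qj) as [j Ej].
  destruct (dec_surj (tv r)) as [m Em].
  exists (Cantor.to_nat (Cantor.to_nat (i, j), m)). unfold eD. rewrite !Cantor.cancel_of_to. cbv beta iota zeta.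
  assert (S : Q2R (qenum i) < epsilon (inhabits 0) (fun r => Q2R (qenum i) < r < Q2R (qenum j) /\ tv r = dec m) < Q2R (qenum j) /\
              tv (epsilon (inhabits 0) (fun r => Q2R (qenum i) < r < Q2R (qenum j) /\ tv r = dec m)) = dec m).
  { apply epsilon_spec. exists r. rewrite Ei, Ej. split; [lra| auto]. }
  rewrite Ei, Ej in S |- *. destruct S as [S1 S2]. split; [lra|]. rewrite S2. auto.
Qed.

Lemma Dd : forall u v, u < v -> exists n, u < eD n < v.
Proof.
  intros u v H. destruct (eD_prop u ((u + v) / 2) v) as [n [Hn _]]; [lra|]. exists n. exact Hn.
Qed.

Definition Vq (n : nat) (q : QinR) : Prop := V n (G eD x0 (proj1_sig q)).

Lemma transfer f : incl (sub f) L -> forall q : QinR,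
  sat R_lt1_Q Vq q f <-> sat R_lt1_R V (G eD x0 (proj1_sig q)) f.
Proof.
  induction f as [n| |a IHa b IHb|a IHa]; intros Hi q; simpl.
  - unfold Vq. tauto.
  - tauto.
  - assert (Ha : incl (sub a) L) by (intros y Hy; apply Hi; simpl; right; apply in_or_app; left; exact Hy).
    assert (Hb : incl (sub b) L) by (intros y Hy; apply Hi; simpl; right; apply in_or_app; right; exact Hy).
    rewrite (IHa Ha q), (IHb Hb q). tauto.
  - assert (Ha : incl (sub a) L) by (intros y Hy; apply Hi; simpl; right; exact Hy).
    assert (HaL : In a L) by (apply Ha; destruct a; simpl; left; reflexivity).
    split.
    + intros [q' [Hr Hs]]. exists (G eD x0 (proj1_sig q')). split.
      * unfold R_lt1_R. apply (G_lt1 eD x0 Dd); [exact (proj2_sig q)| exact (proj2_sig q')| exact Hr].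
      * apply (IHa Ha q'). exact Hs.
    + intros [r [Hr Hs]]. unfold R_lt1_R in Hr. apply Rabs_def2 in Hr.
      destruct (eD_prop (G eD x0 (proj1_sig q) - 1) r (G eD x0 (proj1_sig q) + 1)) as [n [Hn Htv]]; [lra|].
      destruct (G_back eD x0 Dd (proj1_sig q) n (proj2_sig q)) as [b [Qb [Hab Gb]]].
      { apply Rabs_def1; lra. }
      exists (exist _ b Qb). split; [exact Hab|].
      apply (IHa Ha). simpl. rewrite Gb. apply (tv_eq _ _ _ Htv HaL). exact Hs.
Qed.
End Modal.

Theorem theorem4p12 : forall phi : form, Log_lt1_Q phi -> Log_lt1_R phi.
Proof.
  intros phi HQ V x0. apply NNPP. intro Hn.
  assert (Q0 : exists q : Q, (0:R) = Q2R q) by (exists 0%Q; unfold Q2R; simpl; ring).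
  assert (H := HQ (Vq phi V x0) (exist _ 0 Q0)).
  apply (transfer phi V x0 phi (fun y h => h)) in H. simpl in H.
  rewrite (G_0 (eD phi V) x0 (Dd phi V)) in H. contradiction.
Qed.
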